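(* For $\lambda\in\{1,2\}$, the $\Gamma_2$-contractions $(M_{s_1},M_{s_2})|_{\mathbb A^{(\lambda)}_{\rm triv}(\mathbb D^2)}$ and $(M_{s_1},M_{s_2})|_{\mathbb A^{(\lambda)}_{\rm sign}(\mathbb D^2)}$ are not similar, i.e. there is no bounded invertible operator $X:\mathbb A^{(\lambda)}_{\rm triv}(\mathbb D^2)\to\mathbb A^{(\lambda)}_{\rm sign}(\mathbb D^2)$ with $XM_{s_i}=M_{s_i}X$ for $i=1,2$.
   Context: $s_1=z_1+z_2$, $s_2=z_1z_2$; $\Gamma_2=\{(z_1+z_2,z_1z_2):z\in\overline{\mathbb D}^2\}$ and a $\Gamma_2$-contraction is a commuting pair having $\Gamma_2$ as a spectral set. $\mathbb A^{(2)}(\mathbb D^2)$ is the Bergman space of $\mathbb D^2$ (kernel $\prod_i(1-z_i\bar w_i)^{-2}$) and $\mathbb A^{(1)}(\mathbb D^2)=H^2(\mathbb D^2)$ the Hardy space (kernel $\prod_i(1-z_i\bar w_i)^{-1}$). $\mathbb A^{(\lambda)}_{\rm triv}(\mathbb D^2)$ and $\mathbb A^{(\lambda)}_{\rm sign}(\mathbb D^2)$ are the subspaces of symmetric, respectively antisymmetric, functions under $(z_1,z_2)\mapsto(z_2,z_1)$. *)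

(* Defs.v *)
From HB Require Import structures.
From mathcomp Require Import all_boot all_order all_algebra.
From mathcomp Require Import complex.
From mathcomp Require Import reals.
Set Implicit Arguments. Unset Strict Implicit. Unset Printing Implicit Defensive.
Import Order.TTheory GRing.Theory Num.Theory.
Local Open Scope ring_scope.

(* Functions on the bidisc D^2 are represented by their Taylor coefficients:
   f(z1,z2) = \sum_{a,b} c a b z1^a z2^b, with c : nat -> nat -> R[i]. *)
Definition coefs (R : realType) := nat -> nat -> R[i].

Definition sqmod (R : realType) (z : R[i]) : R := (complex.Re z) ^+ 2 + (complex.Im z) ^+ 2.

(* ||z1^a z2^b||^2 in A^(lambda)(D^2), the RKHS with kernel
   prod_i (1 - z_i conj(w_i))^(-lambda):  1 / (C(a+l-1,a) C(b+l-1,b)).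
   lambda = 1: Hardy space H^2(D^2) (weight 1);
   lambda = 2: Bergman space (weight 1/((a+1)(b+1))). *)
Definition wt (R : realType) (lam a b : nat) : R :=
  (('C(a + lam - 1, a) * 'C(b + lam - 1, b))%N%:R)^-1.

Definition psum (R : realType) (lam : nat) (c : coefs R) (N : nat) : R :=
  \sum_(a < N) \sum_(b < N) wt R lam a b * sqmod (c a b).

(* ||f||^2 <= M  (norm^2 is the sup of the partial sums) *)
Definition normsq_le (R : realType) (lam : nat) (c : coefs R) (M : R) : Prop :=
  forall N, psum lam c N <= M.

Definition inA (R : realType) (lam : nat) (c : coefs R) : Prop :=
  exists M : R, normsq_le lam c M.

Definition inTriv (R : realType) (lam : nat) (c : coefs R) : Prop :=
  inA lam c /\ forall a b, c a b = c b a.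
Definition inSign (R : realType) (lam : nat) (c : coefs R) : Prop :=
  inA lam c /\ forall a b, c a b = - c b a.

Definition Mz1 (R : realType) (c : coefs R) : coefs R :=
  fun a b => if a is a'.+1 then c a' b else 0.
Definition Mz2 (R : realType) (c : coefs R) : coefs R :=
  fun a b => if b is b'.+1 then c a b' else 0.
Definition Ms1 (R : realType) (c : coefs R) : coefs R :=
  fun a b => Mz1 c a b + Mz2 c a b.
Definition Ms2 (R : realType) (c : coefs R) : coefs R := Mz1 (Mz2 c).

Definition bounded_linear_op (R : realType) (lam : nat)
    (P Q : coefs R -> Prop) (X : coefs R -> coefs R) : Prop :=
  (forall f, P f -> Q (X f)) /\
  (forall f g, P f -> P g -> X (fun a b => f a b + g a b) =
                              (fun a b => X f a b + X g a b)) /\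
  (forall (k : R[i]) f, P f -> X (fun a b => k * f a b) = (fun a b => k * X f a b)) /\
  (exists K : R, 0 <= K /\
     forall f M, P f -> normsq_le lam f M -> normsq_le lam (X f) (K * M)).

(* Main.v *)
Require Import Defs.
From HB Require Import structures.
From mathcomp Require Import all_boot all_order all_algebra.
From mathcomp Require Import complex.
From mathcomp Require Import reals.
From mathcomp Require Import ring lra zify.
From Stdlib Require Import FunctionalExtensionality.
Import Order.TTheory GRing.Theory Num.Theory.
Local Open Scope ring_scope.

Section Basics.
Variable R : realType.

Lemma inv_le_mul (x y k : R) : 0 < x -> 0 < y -> y <= k * x -> x^-1 <= k * y^-1.
Proof.
move=> x0 y0 h.
have h1 : x^-1 * y <= k by rewrite ler_pdivrMl // mulrC.
have yi : 0 <= y^-1 by rewrite invr_ge0 ltW.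
have := ler_wpM2r yi h1.
by rewrite mulfK // gt_eqF.
Qed.

Lemma wt_eq1 a b : wt R 1 a b = 1.
Proof. by rewrite /wt !addnK !binn invr1. Qed.

Lemma wt_eq2 a b : wt R 2 a b = ((a.+1 * b.+1)%N%:R)^-1.
Proof. by rewrite /wt !addn2 !subn1 /= !binSn. Qed.

Lemma wt_sym lam a b : wt R lam a b = wt R lam b a.
Proof. by rewrite /wt mulnC. Qed.

Variable lam : nat.
Hypothesis hlam : lam = 1%N \/ lam = 2%N.

Lemma wt_gt0 a b : 0 < wt R lam a b.
Proof. case: hlam => ->; first by rewrite wt_eq1. by rewrite wt_eq2 invr_gt0 ltr0n muln_gt0. Qed.

Lemma wt_ge0 a b : 0 <= wt R lam a b.
Proof. exact: ltW (wt_gt0 a b). Qed.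

Lemma wt_S1 a b : wt R lam a.+1 b <= wt R lam a b.
Proof.
case: hlam => ->; first by rewrite !wt_eq1.
rewrite !wt_eq2 -[X in _ <= X]mul1r; apply: inv_le_mul; rewrite ?ltr0n ?muln_gt0 //.
by rewrite mul1r ler_nat leq_mul2r leqnSn orbT.
Qed.

Lemma wt_S2 a b : wt R lam a b.+1 <= wt R lam a b.
Proof. by rewrite wt_sym [wt _ _ a b]wt_sym wt_S1. Qed.

Lemma wt_P1 a b : wt R lam a b <= 2 * wt R lam a.+1 b.
Proof.
case: hlam => ->; first by rewrite !wt_eq1; lra.
rewrite !wt_eq2; apply: inv_le_mul; rewrite ?ltr0n ?muln_gt0 //.
rewrite -natrM ler_nat mulnA leq_mul2r; apply/orP; right.
rewrite mul2n -addnn. lia.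
Qed.

Lemma wt_P2 a b : wt R lam a b <= 2 * wt R lam a b.+1.
Proof. by rewrite wt_sym [wt _ _ a b.+1]wt_sym wt_P1. Qed.

Lemma wt_diag a b : wt R lam (a + b).+1 0 / (a.+1)%:R <= wt R lam a b.
Proof.
case: hlam => ->.
  rewrite !wt_eq1 mul1r invr_le1 ?ler1n ?unitfE ?pnatr_eq0 //.
rewrite !wt_eq2 -invfM -[X in _ <= X]mul1r; apply: inv_le_mul; rewrite ?ltr0n ?muln_gt0 //.
  by rewrite -natrM ltr0n.
rewrite mul1r -!natrM ler_nat; nia.
Qed.

Definition sq := @sqmod R.

Lemma sqmod_ge0 (x : R[i]) : 0 <= sqmod x.
Proof. by rewrite /sqmod addr_ge0 ?sqr_ge0. Qed.

Lemma sqmodD (x y : R[i]) : sqmod (x + y) <= 2 * sqmod x + 2 * sqmod y.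
Proof.
case: x => a b; case: y => c d; rewrite /sqmod /=.
have := sqr_ge0 (a - c); have := sqr_ge0 (b - d). nra.
Qed.

Lemma sqmodM (x y : R[i]) : sqmod (x * y) = sqmod x * sqmod y.
Proof. case: x => a b; case: y => c d; rewrite /sqmod /=. ring. Qed.

Lemma sqmod0 : sqmod (0 : R[i]) = 0.
Proof. by rewrite /sqmod /= expr0n /= addr0. Qed.

Lemma sqmod1 : sqmod (1 : R[i]) = 1.
Proof. by rewrite /sqmod /= expr1n expr0n /= addr0. Qed.

Lemma sqmodN (x : R[i]) : sqmod (- x) = sqmod x.
Proof. case: x => a b; rewrite /sqmod /=. by rewrite !sqrrN. Qed.

Lemma sqmod_eq0 (x : R[i]) : sqmod x = 0 -> x = 0.
Proof.
case: x => a b; rewrite /sqmod /= => h.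
have ha : a ^+ 2 = 0 by apply/eqP; rewrite eq_le sqr_ge0 andbT -h lerDl sqr_ge0.
have hb : b ^+ 2 = 0 by move: h; rewrite ha add0r.
move/eqP: ha; rewrite sqrf_eq0 => /eqP ->; move/eqP: hb; rewrite sqrf_eq0 => /eqP ->.
by [].
Qed.

Definition S (c : coefs R) n m := \sum_(a < n) \sum_(b < m) wt R lam a b * sqmod (c a b).

Lemma psumE c N : psum lam c N = S c N N. Proof. by []. Qed.

Lemma T_ge0 c a b : 0 <= wt R lam a b * sqmod (c a b).
Proof. by rewrite mulr_ge0 ?wt_ge0 ?sqmod_ge0. Qed.

Lemma S_ge0 c n m : 0 <= S c n m.
Proof. by apply: sumr_ge0 => a _; apply: sumr_ge0 => b _; apply: T_ge0. Qed.

Lemma S_monol c n m : S c n m <= S c n.+1 m.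
Proof.
rewrite /S big_ord_recr /= lerDl.
by apply: sumr_ge0 => b _; apply: T_ge0.
Qed.

Lemma S_monor c n m : S c n m <= S c n m.+1.
Proof.
rewrite /S; apply: ler_sum => a _; rewrite big_ord_recr /= lerDl.
exact: T_ge0.
Qed.

Lemma S_mono c n m n' m' : (n <= n')%N -> (m <= m')%N -> S c n m <= S c n' m'.
Proof.
move=> hn hm; apply: (@le_trans _ _ (S c n' m)).
  elim: n' hn => [|n' IH]; first by rewrite leqn0 => /eqP ->.
  rewrite leq_eqVlt => /orP [/eqP -> //|]; rewrite ltnS => /IH h.
  exact: le_trans h (S_monol _ _ _).
elim: m' hm => [|m' IH]; first by rewrite leqn0 => /eqP ->.
rewrite leq_eqVlt => /orP [/eqP -> //|]; rewrite ltnS => /IH h.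
exact: le_trans h (S_monor _ _ _).
Qed.

Lemma S_le (c d : coefs R) (K : R) n m :
  (forall a b, sqmod (d a b) <= K * sqmod (c a b)) -> S d n m <= K * S c n m.
Proof.
move=> h; rewrite /S mulr_sumr; apply: ler_sum => a _; rewrite mulr_sumr.
apply: ler_sum => b _; rewrite mulrCA; apply: ler_wpM2l; [exact: wt_ge0|exact: h].
Qed.

Lemma S_add (c d : coefs R) n m :
  S (fun a b => c a b + d a b) n m <= 2 * S c n m + 2 * S d n m.
Proof.
rewrite /S !mulr_sumr -big_split; apply: ler_sum => a _.
rewrite !mulr_sumr -big_split; apply: ler_sum => b _ /=.
rewrite mulrCA [2 * (wt _ _ _ _ * _)]mulrCA -mulrDr; apply: ler_wpM2l; first exact: wt_ge0.
exact: sqmodD.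
Qed.

Lemma S_swap (c : coefs R) n : S (fun a b => c b a) n n = S c n n.
Proof.
rewrite /S exchange_big; apply: eq_bigr => a _; apply: eq_bigr => b _.
by rewrite wt_sym.
Qed.

Lemma S_Mz1 (c : coefs R) n : S (Mz1 c) n n <= S c n n.
Proof.
case: n => [|n]; first by rewrite /S !big_ord0.
rewrite {1}/S big_ord_recl /= big1; last by move=> b _; rewrite sqmod0 mulr0.
rewrite add0r; apply: (@le_trans _ _ (S c n n.+1)); last exact: S_monol.
apply: ler_sum => a _; apply: ler_sum => b _ /=.
rewrite /bump /= add1n; apply: ler_wpM2r; [exact: sqmod_ge0| exact: wt_S1].
Qed.

Lemma S_Mz2 (c : coefs R) n : S (Mz2 c) n n <= S c n n.
Proof.
have -> : S (Mz2 c) n n = S (fun a b => Mz1 (fun x y => c y x) b a) n n.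
  by apply: eq_bigr => a _; apply: eq_bigr => b _; case: (nat_of_ord b).
rewrite S_swap -[X in _ <= X]S_swap; exact: S_Mz1.
Qed.

Lemma S_shl1 (c : coefs R) n : S (fun a b => c a.+1 b) n n <= 2 * S c n.+1 n.+1.
Proof.
apply: (@le_trans _ _ (2 * S c n.+1 n)); last first.
  by apply: ler_wpM2l => //; apply: S_monor.
rewrite [X in _ <= 2 * X]/S big_ord_recl /= mulrDr.
apply: (@le_trans _ _ (2 * \sum_(i < n) \sum_(b < n) wt R lam (bump 0 i) b * sqmod (c (bump 0 i) b))).
  rewrite mulr_sumr; apply: ler_sum => a _; rewrite mulr_sumr; apply: ler_sum => b _.
  rewrite /bump /= add1n mulrA; apply: ler_wpM2r; [exact: sqmod_ge0|exact: wt_P1].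
rewrite lerDr mulr_ge0 //; apply: sumr_ge0 => b _; exact: T_ge0.
Qed.

Lemma S_shl2 (c : coefs R) n : S (fun a b => c a b.+1) n n <= 2 * S c n.+1 n.+1.
Proof.
rewrite -S_swap -[S c _ _]S_swap; exact: (S_shl1 (fun a b => c b a)).
Qed.


Lemma inA_le (c d : coefs R) (K : R) : 0 <= K ->
  (forall a b, sqmod (d a b) <= K * sqmod (c a b)) -> inA lam c -> inA lam d.
Proof.
move=> K0 h [M hM]; exists (K * M) => N; rewrite psumE.
apply: (le_trans (S_le c d K N N h)); apply: ler_wpM2l => //; exact: hM.
Qed.

Lemma inA_ext (c d : coefs R) : (forall a b, d a b = c a b) -> inA lam c -> inA lam d.
Proof. move=> h; apply: (@inA_le c d 1) => // a b; by rewrite h mul1r. Qed.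

Lemma inA_add (c d : coefs R) : inA lam c -> inA lam d -> inA lam (fun a b => c a b + d a b).
Proof.
move=> [M hM] [M' hM']; exists (2 * M + 2 * M') => N; rewrite psumE.
apply: (le_trans (S_add c d N N)); apply: lerD; apply: ler_wpM2l => //; [exact: hM|exact: hM'].
Qed.

Lemma inA_scale (k : R[i]) (c : coefs R) : inA lam c -> inA lam (fun a b => k * c a b).
Proof. apply: inA_le; first exact: sqmod_ge0. by move=> a b; rewrite sqmodM. Qed.

Lemma inA_mask (P : nat -> nat -> bool) (c : coefs R) :
  inA lam c -> inA lam (fun a b => if P a b then c a b else 0).
Proof.
apply: (@inA_le c _ 1) => // a b; rewrite mul1r; case: (P a b) => //.
by rewrite sqmod0 sqmod_ge0.
Qed.

Lemma inA_Mz1 (c : coefs R) : inA lam c -> inA lam (Mz1 c).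
Proof. move=> [M hM]; exists M => N; rewrite !psumE; apply: le_trans (S_Mz1 _ _) _; exact: hM. Qed.

Lemma inA_Mz2 (c : coefs R) : inA lam c -> inA lam (Mz2 c).
Proof. move=> [M hM]; exists M => N; rewrite !psumE; apply: le_trans (S_Mz2 _ _) _; exact: hM. Qed.

Lemma inA_shl1 (c : coefs R) : inA lam c -> inA lam (fun a b => c a.+1 b).
Proof.
move=> [M hM]; exists (2 * M) => N; rewrite !psumE; apply: le_trans (S_shl1 _ _) _.
apply: ler_wpM2l => //; exact: hM.
Qed.

Lemma inA_shl2 (c : coefs R) : inA lam c -> inA lam (fun a b => c a b.+1).
Proof.
move=> [M hM]; exists (2 * M) => N; rewrite !psumE; apply: le_trans (S_shl2 _ _) _.
apply: ler_wpM2l => //; exact: hM.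
Qed.

Lemma inA_swap (c : coefs R) : inA lam c -> inA lam (fun a b => c b a).
Proof. move=> [M hM]; exists M => N; rewrite !psumE S_swap; exact: hM. Qed.

Lemma sum_single (F : nat -> R) j N : (forall i, i != j -> F i = 0) ->
  \sum_(i < N) F i = if (j < N)%N then F j else 0.
Proof.
move=> h; elim: N => [|N IH]; first by rewrite big_ord0.
rewrite big_ord_recr /= IH ltnS.
case: (ltngtP j N) => hj.
- rewrite (h N) ?addr0 //; apply/eqP => e; by move: hj; rewrite e ltnn.
- rewrite (h N) ?addr0 //; apply/eqP => e; by move: hj; rewrite e ltnn.
- by rewrite hj add0r.
Qed.

Definition E1 (n : nat) : coefs R := fun a b => if (a == n) && (b == 0%N) then 1 else 0.

Lemma psum_E1 n N : psum lam (E1 n) N <= wt R lam n 0.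
Proof.
rewrite psumE /S.
rewrite (@sum_single (fun a => \sum_(b < N) wt R lam a b * sqmod (E1 n a b)) n N).
  case: ifP => _; last exact: wt_ge0.
  rewrite (@sum_single (fun b => wt R lam n b * sqmod (E1 n n b)) 0 N).
    by case: ifP => _; rewrite /E1 ?eqxx /= ?sqmod1 ?mulr1 ?wt_ge0.
  by move=> i /negbTE hi; rewrite /E1 hi andbF sqmod0 mulr0.
move=> a /negbTE ha; apply: big1 => b _; by rewrite /E1 ha /= sqmod0 mulr0.
Qed.

Lemma inA_E1 n : inA lam (E1 n).
Proof. exists (wt R lam n 0) => N; exact: psum_E1. Qed.

Definition q (n : nat) : coefs R := fun a b => E1 n a b - E1 n b a.

Lemma psum_q n N : psum lam (q n) N <= 4 * wt R lam n 0.
Proof.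
rewrite psumE; apply: (le_trans (S_add (E1 n) (fun a b => - E1 n b a) N N)).
have -> : S (fun a b => - E1 n b a) N N = S (E1 n) N N.
  rewrite -S_swap; apply: eq_bigr => a _; apply: eq_bigr => b _; by rewrite sqmodN.
have := psum_E1 n N; rewrite psumE => h; lra.
Qed.

Lemma q_rec n a b : q n.+2 a b = Ms1 (q n.+1) a b + (-1) * Ms2 (q n) a b.
Proof.
rewrite /q /Ms1 /Ms2 /Mz1 /Mz2 /E1.
case: a => [|a]; case: b => [|b] /=; rewrite ?eqSS ?andbT ?andbF /=; ring.
Qed.

Lemma q0 a b : q 0 a b = 0.
Proof. rewrite /q /E1; case: a => [|a]; case: b => [|b] //=; by rewrite ?subrr ?subr0. Qed.


Lemma triv_Ms1 (c : coefs R) : inTriv lam c -> inTriv lam (Ms1 c).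
Proof.
move=> [hA hs]; split; first by apply: inA_add; [apply: inA_Mz1|apply: inA_Mz2].
move=> a b; rewrite /Ms1 /Mz1 /Mz2.
case: a => [|a]; case: b => [|b] //=; rewrite ?add0r ?addr0 //.
by rewrite addrC [c a _]hs [c a.+1 _]hs.
Qed.

Lemma triv_Ms2 (c : coefs R) : inTriv lam c -> inTriv lam (Ms2 c).
Proof.
move=> [hA hs]; split; first by apply: inA_Mz1; apply: inA_Mz2.
move=> a b; rewrite /Ms2 /Mz1 /Mz2.
by case: a => [|a]; case: b => [|b] //=.
Qed.

Lemma sign_Ms1 (c : coefs R) : inSign lam c -> inSign lam (Ms1 c).
Proof.
move=> [hA hs]; split; first by apply: inA_add; [apply: inA_Mz1|apply: inA_Mz2].
move=> a b; rewrite /Ms1 /Mz1 /Mz2.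
case: a => [|a]; case: b => [|b] //=; rewrite ?add0r ?addr0 ?oppr0 //.
by rewrite opprD addrC [c a _]hs [c a.+1 _]hs.
Qed.

Lemma sign_Ms2 (c : coefs R) : inSign lam c -> inSign lam (Ms2 c).
Proof.
move=> [hA hs]; split; first by apply: inA_Mz1; apply: inA_Mz2.
move=> a b; rewrite /Ms2 /Mz1 /Mz2.
by case: a => [|a]; case: b => [|b] //=; rewrite oppr0.
Qed.

Lemma sign_scale (k : R[i]) (c : coefs R) : inSign lam c -> inSign lam (fun a b => k * c a b).
Proof. move=> [hA hs]; split; first exact: inA_scale. by move=> a b; rewrite hs mulrN. Qed.

Lemma triv_scale (k : R[i]) (c : coefs R) : inTriv lam c -> inTriv lam (fun a b => k * c a b).
Proof. move=> [hA hs]; split; first exact: inA_scale. by move=> a b; rewrite hs. Qed.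

Lemma triv_add (c d : coefs R) : inTriv lam c -> inTriv lam d -> inTriv lam (fun a b => c a b + d a b).
Proof. move=> [hA hs] [hA' hs']; split; first exact: inA_add. by move=> a b; rewrite hs hs'. Qed.

Lemma sign_q n : inSign lam (q n).
Proof.
split; last by move=> a b; rewrite /q opprB.
apply: inA_add; first exact: inA_E1.
apply: (@inA_le (fun a b => E1 n b a)) => // [a b|]; first by rewrite sqmodN mul1r.
exact/inA_swap/inA_E1.
Qed.


Lemma decomp (D : coefs R) : inTriv lam D -> D 0%N 0%N = 0 ->
  exists A B, inTriv lam A /\ inTriv lam B /\ forall a b, D a b = Ms1 A a b + Ms2 B a b.
Proof.
move=> [hD hs] h0.
pose A : coefs R := fun a b => (if b == 0%N then D a.+1 b else 0) +
   (if (b != 0%N) && (a == 0%N) then D a b.+1 else 0).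
pose B : coefs R := fun a b => D a.+1 b.+1 + (-1) * ((if a == 0%N then D a b.+2 else 0) +
   (if b == 0%N then D a.+2 b else 0)).
exists A, B; split; [split|split; [split|]].
- rewrite /A; apply: inA_add.
    exact: (@inA_mask (fun a b => b == 0%N) _ (inA_shl1 _ hD)).
  exact: (@inA_mask (fun a b => (b != 0%N) && (a == 0%N)) _ (inA_shl2 _ hD)).
- move=> a b; rewrite /A; case: a => [|a]; case: b => [|b] //=.
  1,2: by rewrite ?addr0 ?add0r hs.
- rewrite /B; apply: inA_add; first exact: (inA_shl1 _ (inA_shl2 _ hD)).
  apply: inA_scale; apply: inA_add.
    exact: (@inA_mask (fun a b => a == 0%N) _ (inA_shl2 _ (inA_shl2 _ hD))).
  exact: (@inA_mask (fun a b => b == 0%N) _ (inA_shl1 _ (inA_shl1 _ hD))).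
- move=> a b; rewrite /B [D b.+1 a.+1]hs [D b a.+2]hs [D b.+2 a]hs.
  by case: (a == 0%N); case: (b == 0%N); ring.
- move=> a b; rewrite /Ms1 /Ms2 /Mz1 /Mz2 /A /B.
  case: a => [|a]; case: b => [|b] /=.
  + by rewrite h0 !addr0.
  + case: b => [|b] /=; last by rewrite !add0r addr0.
    by rewrite hs !addr0 add0r.
  + by rewrite !addr0.
  + rewrite andbF; ring.
Qed.

Lemma invariant (G : nat -> coefs R) :
  (forall a b, G 0%N a b = 0) ->
  (forall n a b, G n.+2 a b = Ms1 (G n.+1) a b + (-1) * Ms2 (G n) a b) ->
  forall n a b, (((a + b).+1 < n)%N -> G n a b = 0) /\
                ((a + b).+1 = n -> G n a b = G 1%N 0%N 0%N).
Proof.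
move=> h0 hrec.
pose P n := forall a b, (((a + b).+1 < n)%N -> G n a b = 0) /\
                ((a + b).+1 = n -> G n a b = G 1%N 0%N 0%N).
suff : forall n, P n /\ P n.+1 by move=> H n; case: (H n).
elim=> [|n [IH1 IH2]].
  split=> a b; split=> //; try lia.
  by case: a => [|a]; case: b => [|b] //= _; lia.
split=> // a b.
rewrite hrec /Ms1 /Ms2 /Mz1 /Mz2.
case: a => [|a]; case: b => [|b] /=.
- split=> h; last lia. by rewrite !mulr0 !addr0.
- have [H1 H2] := IH2 0%N b.
  split=> h; rewrite ?mulr0 ?addr0 ?add0r; [apply: H1|apply: H2]; lia.
- have [H1 H2] := IH2 a 0%N.
  split=> h; rewrite ?mulr0 ?addr0 ?add0r; [apply: H1|apply: H2]; lia.
- have [H1 H2] := IH2 a b.+1.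
  have [H3 H4] := IH2 a.+1 b.
  have [H5 H6] := IH1 a b.
  split=> h.
    rewrite H1 ?H3 ?H5; try lia. by rewrite mulr0 !addr0.
  rewrite H2 ?H4 ?H6; try lia. ring.
Qed.

Definition H (n : nat) : R := \sum_(i < n) ((i.+1)%:R)^-1.

Lemma H_pow k : k%:R / 2 <= H (2 ^ k).
Proof.
elim: k => [|k IH]; first by rewrite mul0r /H expn0 big_ord1 invr1.
have E n : \sum_(i < n) ((i.+1)%:R)^-1 = \sum_(0 <= i < n) ((i.+1)%:R)^-1 :> R.
  by rewrite big_mkord.
rewrite /H !E in IH *.
rewrite (@big_cat_nat _ _ _ (2 ^ k)) //=; last by rewrite leq_pexp2l.
have h2 : (1 / 2 : R) <= \sum_(2 ^ k <= i < 2 ^ k.+1) ((i.+1)%:R)^-1.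
  apply: (@le_trans _ _ (\sum_(2 ^ k <= i < 2 ^ k.+1) ((2 ^ k.+1)%:R)^-1)); last first.
    rewrite big_nat_cond [X in _ <= X]big_nat_cond; apply: ler_sum => i /andP [/andP [_ hi] _].
    by rewrite lef_pV2 ?posrE ?ltr0n ?expn_gt0 // ler_nat.
  rewrite sumr_const_nat.
  have -> : (2 ^ k.+1 - 2 ^ k = 2 ^ k)%N by rewrite expnS mul2n -addnn addnK.
  have hp : (0 : R) < (2 ^ k)%:R by rewrite ltr0n expn_gt0.
  rewrite expnS natrM -[X in _ <= X]mulr_natr invfM -mulrA mulVf ?gt_eqF // mulr1 div1r //.
rewrite -natr1; lra.
Qed.


Lemma antisym0 (x : R[i]) : x = - x -> x = 0.
Proof.
move=> h; have /eqP : x *+ 2 = 0 by rewrite mulr2n {1}h addNr.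
by rewrite -mulr_natl mulf_eq0 pnatr_eq0 /= => /eqP.
Qed.

Lemma single_le n (F : 'I_n -> R) (i : 'I_n) : (forall j, 0 <= F j) -> F i <= \sum_(j < n) F j.
Proof. move=> h; rewrite (bigD1 i) //= lerDl; exact: sumr_ge0. Qed.

Lemma main_false (X Y : coefs R -> coefs R) :
  bounded_linear_op lam (inTriv lam) (inSign lam) X ->
  bounded_linear_op lam (inSign lam) (inTriv lam) Y ->
  (forall f, inTriv lam f -> Y (X f) = f) ->
  (forall g, inSign lam g -> X (Y g) = g) ->
  (forall f, inTriv lam f -> X (Ms1 f) = Ms1 (X f)) ->
  (forall f, inTriv lam f -> X (Ms2 f) = Ms2 (X f)) -> False.
Proof.
move=> [Xm [Xa [Xs _]]] [Ym [Ya [Ys [KY [KY0 Ybd]]]]] YX XY I1 I2.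
have YM1 g : inSign lam g -> Y (Ms1 g) = Ms1 (Y g).
  move=> hg; have hY := Ym g hg.
  have h1 : inTriv lam (Ms1 (Y g)) by exact: triv_Ms1.
  by rewrite -{1}(XY g hg) -(I1 _ hY) (YX _ h1).
have YM2 g : inSign lam g -> Y (Ms2 g) = Ms2 (Y g).
  move=> hg; have hY := Ym g hg.
  have h1 : inTriv lam (Ms2 (Y g)) by exact: triv_Ms2.
  by rewrite -{1}(XY g hg) -(I2 _ hY) (YX _ h1).
pose G n := Y (q n).
have hG0 a b : G 0%N a b = 0.
  have e : q 0 = (fun a b => 0 * q 0 a b).
    apply: functional_extensionality => x; apply: functional_extensionality => y.
    by rewrite mul0r q0.
  rewrite /G e Ys; [by rewrite mul0r | exact: sign_q].
have hrec n a b : G n.+2 a b = Ms1 (G n.+1) a b + (-1) * Ms2 (G n) a b.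
  have e : q n.+2 = (fun a b => Ms1 (q n.+1) a b + (fun a b => -1 * Ms2 (q n) a b) a b).
    apply: functional_extensionality => x; apply: functional_extensionality => y.
    exact: q_rec.
  have s1 : inSign lam (Ms1 (q n.+1)) by apply: sign_Ms1; exact: sign_q.
  have s2 : inSign lam (Ms2 (q n)) by apply: sign_Ms2; exact: sign_q.
  have s3 : inSign lam (fun a b => -1 * Ms2 (q n) a b) by exact: sign_scale.
  by rewrite /G e (Ya _ _ s1 s3) (Ys _ _ s2) (YM1 _ (sign_q _)) (YM2 _ (sign_q _)).
have inv := @invariant G hG0 hrec.
set f00 := G 1%N 0%N 0%N.
have psi F : inTriv lam F -> F 0%N 0%N = 0 -> X F 1%N 0%N = 0.
  move=> hF h0; have [A [B [hA [hB hD]]]] := @decomp F hF h0.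
  have -> : F = (fun a b => Ms1 A a b + Ms2 B a b).
    apply: functional_extensionality => x; apply: functional_extensionality => y.
    exact: hD.
  rewrite (Xa _ _ (triv_Ms1 _ hA) (triv_Ms2 _ hB)) (I1 _ hA) (I2 _ hB) /=.
  rewrite /Ms1 /Ms2 /Mz1 /Mz2 /= !addr0.
  have [_ hs] := Xm _ hA.
  exact: antisym0 (hs 0%N 0%N).
have trivE : inTriv lam (E1 0).
  split; first exact: inA_E1.
  by move=> a b; rewrite /E1 andbC.
have trivf : inTriv lam (G 1%N) by apply: Ym; exact: sign_q.
pose D := fun a b => G 1%N a b + (- f00) * E1 0 a b.
have trivD : inTriv lam D by apply: triv_add => //; exact: triv_scale.
have D0 : D 0%N 0%N = 0 by rewrite /D /E1 /= mulr1 subrr.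
have fE : G 1%N = (fun a b => D a b + f00 * E1 0 a b).
  apply: functional_extensionality => x; apply: functional_extensionality => y.
  rewrite /D; ring.
have hX1 : X (G 1%N) 1%N 0%N = 1.
  rewrite /G XY; last exact: sign_q.
  by rewrite /q /E1 /= subr0.
have f0 : f00 != 0.
  apply/eqP => hf; move: hX1.
  rewrite fE (Xa _ _ trivD (triv_scale _ _ trivE)) (Xs _ _ trivE) /= psi //.
  by rewrite hf mul0r addr0 => /eqP; rewrite eq_sym oner_eq0.
have key m : sqmod f00 * H m.+1 <= 4 * KY.
  have up := Ybd (q m.+1) (4 * wt R lam m.+1 0) (sign_q _) (psum_q _) m.+1.
  have low : sqmod f00 * (wt R lam m.+1 0 * H m.+1) <= psum lam (G m.+1) m.+1.
    rewrite psumE /S /H mulr_sumr mulr_sumr.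
    apply: ler_sum => a _.
    have ha : (m - a < m.+1)%N by rewrite ltnS leq_subr.
    have hsl := @single_le m.+1 (fun b : 'I_m.+1 => wt R lam a b * sqmod (G m.+1 a b))
                   (Ordinal ha) (fun j => T_ge0 _ _ _).
    apply: le_trans hsl.
    rewrite /=.
    have hsum : (a + (m - a) = m)%N by rewrite subnKC // -ltnS.
    have [_ e] := inv m.+1 a (m - a)%N; rewrite e; last by rewrite hsum.
    rewrite [X in _ <= X]mulrC /f00; apply: ler_wpM2l; first exact: sqmod_ge0.
    have := wt_diag a (m - a)%N; by rewrite hsum.
  have wpos := wt_gt0 m.+1 0.
  rewrite -(ler_pM2r wpos).
  have e1 : sqmod f00 * H m.+1 * wt R lam m.+1 0 = sqmod f00 * (wt R lam m.+1 0 * H m.+1) by ring.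
  have e2 : 4 * KY * wt R lam m.+1 0 = KY * (4 * wt R lam m.+1 0) by ring.
  rewrite e1 e2; exact: le_trans low up.
have spos : 0 < sqmod f00.
  rewrite lt_def sqmod_ge0 andbT; apply/eqP => /sqmod_eq0 h; by rewrite h eqxx in f0.
pose B := Num.Def.archi_bound (4 * KY / sqmod f00).
have hB := @archi_boundP _ (4 * KY / sqmod f00).
have k := key (2 ^ (2 * B)).-1.
rewrite prednK ?expn_gt0 // in k.
have := H_pow (2 * B).
move=> hp.
have : sqmod f00 * ((2 * B)%N%:R / 2) <= 4 * KY.
  apply: le_trans k; apply: ler_wpM2l => //; exact: ltW.
rewrite natrM.
have -> : (2 * B%:R / 2 : R) = B%:R by field.
move=> h.
have h2 : 4 * KY / sqmod f00 < B%:R.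
  by apply: hB; apply: divr_ge0; [apply: mulr_ge0 | exact: ltW].
move: h2; rewrite ltr_pdivrMr // => h2.
move: h; rewrite mulrC => h; lra.
Qed.

End Basics.

Theorem theorem4p24 (R : realType) (lam : nat) (hlam : lam = 1%N \/ lam = 2%N) :
  ~ exists X : coefs R -> coefs R,
      bounded_linear_op lam (inTriv lam) (inSign lam) X /\
      (exists Y : coefs R -> coefs R,
          bounded_linear_op lam (inSign lam) (inTriv lam) Y /\
          (forall f, inTriv lam f -> Y (X f) = f) /\
          (forall g, inSign lam g -> X (Y g) = g)) /\
      (forall f, inTriv lam f -> X (Ms1 f) = Ms1 (X f)) /\
      (forall f, inTriv lam f -> X (Ms2 f) = Ms2 (X f)).
Proof.
move=> [X [hX [[Y [hY [YX XY]]] [I1 I2]]]].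
exact: (@main_false R lam hlam X Y hX hY YX XY I1 I2).
Qed.
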